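(* Let $P$ satisfy (S1)–(S4). Then every element $\bar h\in H$ is both a $[2,t]$-commutator and a $[-2,t]$-commutator, i.e. there are $\bar g_1,\bar g_2\in H$ with $\bar h=\bar g_1\alpha(\bar g_1^{-1})\bar g_2\alpha(\bar g_2^{-1})$ and there are $\bar g_1',\bar g_2'\in H$ with $\bar h=\alpha(\bar g_1')\bar g_1'^{-1}\alpha(\bar g_2')\bar g_2'^{-1}$.
   Context: Conditions on a finite group $P$: (S1) for all $a_1,a_2\in P$ there are $x,y$ with $a_2=x^{-1}a_1^{-1}yxy^{-1}$; (S2) for all $a_1,a_2,a_3$ there are $u,v$ with $a_2=a_3ua_1^{-1}a_3^{-1}vu^{-1}v^{-1}$; (S3) for all $u_1,u_2,u_3,u_4\ne1$ there are $x,y,z$ with $u_4=x^{-1}u_1xy^{-1}u_2yz^{-1}u_3z$; (S4) there are $u_1,u_2,u_3\ne1$ such that there are no $x,y$ with $u_3=x^{-1}u_2^{-1}xy^{-1}u_1^{-1}y$. $H=\bigoplus_{i\in\mathbb Z}H_i$, each $H_i$ a copy of $P$, elements finitely supported sequences $(h_i)_{i\in\mathbb Z}$ with coordinatewise multiplication; $\alpha\in\mathrm{Aut}(H)$ is $\alpha((h_i)_i)=(h_{i+1})_i$. *)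

(* Defs.v *)
(* P is modelled as the whole carrier of a finGroupType gT. *)
From mathcomp Require Import all_boot all_algebra all_fingroup.
Set Implicit Arguments. Unset Strict Implicit. Unset Printing Implicit Defensive.
Import GRing.Theory Num.Theory.

Local Open Scope group_scope.

Section Conds.
Variable gT : finGroupType.

Definition S1 : Prop := forall a1 a2 : gT,
  exists x y : gT, a2 = x^-1 * a1^-1 * y * x * y^-1.

Definition S2 : Prop := forall a1 a2 a3 : gT,
  exists u v : gT, a2 = a3 * u * a1^-1 * a3^-1 * v * u^-1 * v^-1.

Definition S3 : Prop := forall u1 u2 u3 u4 : gT,
  u1 != 1 -> u2 != 1 -> u3 != 1 -> u4 != 1 ->
  exists x y z : gT, u4 = x^-1 * u1 * x * y^-1 * u2 * y * z^-1 * u3 * z.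

Definition S4 : Prop := exists u1 u2 u3 : gT,
  [/\ u1 != 1, u2 != 1, u3 != 1 &
   ~ exists x y : gT, u3 = x^-1 * u2^-1 * x * y^-1 * u1^-1 * y].

(* H = restricted direct sum of Z copies of P: finitely supported maps int -> gT,
   with coordinatewise operations. *)
Definition inH (h : int -> gT) : Prop :=
  exists N : nat, forall i : int, (N < `|i|)%N -> h i = 1.

Definition Hmul (g h : int -> gT) : int -> gT := fun i => g i * h i.
Definition Hinv (g : int -> gT) : int -> gT := fun i => (g i)^-1.

Definition alpha (h : int -> gT) : int -> gT := fun i => h (i + 1)%R.

End Conds.

(* Main.v *)
Require Import Defs.
From mathcomp Require Import all_boot all_algebra all_fingroup.
From mathcomp Require Import zify.
From Stdlib Require Import FunctionalExtensionality.
Import GRing.Theory Num.Theory.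

Section Aux.
Variable gT : finGroupType.
Local Open Scope group_scope.

Fixpoint prodF (v : int -> gT) (i : int) (n : nat) : gT :=
  match n with 0 => 1 | n'.+1 => v i * prodF v (i + 1)%R n' end.

Lemma prodF_cat v i m n :
  prodF v i (m + n) = prodF v i m * prodF v (i + m%:Z)%R n.
Proof.
elim: m i => [|m IH] i /=; first by rewrite mul1g addr0.
rewrite IH mulgA; congr (_ * prodF v _ n); lia.
Qed.

Lemma prodF_eq v w i n :
  (forall k, (k < n)%N -> v (i + k%:Z)%R = w (i + k%:Z)%R) ->
  prodF v i n = prodF w i n.
Proof.
elim: n i => [|n IH] i H //=.
have := H 0%N isT; rewrite addr0 => ->; congr (_ * _).
apply: IH => k hk; have e : (i + 1 + k%:Z = i + k.+1%:Z)%R by lia.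
by rewrite e; apply: H.
Qed.

Lemma prodF1 v i n :
  (forall k, (k < n)%N -> v (i + k%:Z)%R = 1) -> prodF v i n = 1.
Proof.
move=> H; rewrite (@prodF_eq v (fun _ => 1)) //.
by elim: n i {H} => [|n IH] i //=; rewrite IH mulg1.
Qed.

Lemma lemT (v : int -> gT) (M : nat) :
  (forall i, (M < absz i)%N -> v i = 1) ->
  prodF v (- M%:Z)%R (M + M + 1) = 1 ->
  exists b, inH b /\ forall i, v i = b i * (b (i + 1)%R)^-1.
Proof.
move=> vM tot.
pose b i := if (i <= M%:Z)%R then prodF v i (absz (M%:Z + 1 - i)%R) else 1.
have bS : forall i, (i <= M%:Z)%R -> b (i + 1)%R = prodF v (i + 1)%R (absz (M%:Z - i)%R).
  move=> i hi; rewrite /b; case: ifP => h.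
    by congr (prodF v _ _); lia.
  have -> : absz (M%:Z - i)%R = 0%N by lia.
  by [].
exists b; split.
  exists M => i hi; rewrite /b; case: ifP => // h.
  have -> : absz (M%:Z + 1 - i)%R = (absz (- M%:Z - i)%R + (M + M + 1))%N by lia.
  rewrite prodF_cat prodF1 ?mul1g.
    have -> : (i + (absz (- M%:Z - i)%R)%:Z = - M%:Z)%R by lia.
    exact: tot.
  move=> k hk; apply: vM; lia.
move=> i; case: (boolP (i <= M%:Z)%R) => h.
  rewrite bS // /b h.
  have -> : absz (M%:Z + 1 - i)%R = (absz (M%:Z - i)%R).+1 by lia.
  by rewrite /= mulgK.
rewrite /b (negbTE h).
have -> : ((i + 1)%R <= M%:Z)%R = false by lia.
by rewrite invg1 mulg1; apply: vM; lia.
Qed.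

Ltac plia := repeat match goal with X := _ : int |- _ => subst X end; lia.

Lemma part1 : S1 gT -> forall h : int -> gT, inH h ->
  exists g1 g2 : int -> gT, inH g1 /\ inH g2 /\
     h = Hmul (Hmul (Hmul g1 (alpha (Hinv g1))) g2) (alpha (Hinv g2)).
Proof.
move=> s1 h [N hN].
pose Q := prodF h (- N%:Z)%R (N + N + 1).
have [x [y E]] := s1 Q 1.
have key : Q * (x * (y * x^-1 * y^-1)) = 1.
  have E' := congr1 (mulg (Q * x)) E.
  rewrite mulg1 !mulgA mulgK mulgV mul1g in E'.
  by rewrite !mulgA E' mulgKV mulgK mulgV.
pose P : int := (N%:Z + 2)%R.
pose a (i : int) := if i == P then x else if i == (P + 1)%R then y else 1.
pose v (i : int) := (a i * (a (i + 1)%R)^-1)^-1 * h i.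
have a1 : forall i, (i < P)%R || (P + 1 < i)%R -> a i = 1.
  move=> i hi; rewrite /a.
  have -> : (i == P) = false by plia.
  have -> : (i == (P + 1)%R) = false by plia.
  by [].
have vM' : forall i, (i < - N%:Z)%R || (P + 1 < i)%R -> v i = 1.
  move=> i hi; rewrite /v hN; last by plia.
  by rewrite (a1 i) ?(a1 (i+1)%R) ?invg1 ?mulg1 ?invg1 //; plia.
have vM : forall i, (N + 3 < absz i)%N -> v i = 1.
  move=> i hi; apply: vM'; plia.
have tot : prodF v (- (N + 3)%N%:Z)%R (N + 3 + (N + 3) + 1) = 1.
  have -> : (N + 3 + (N + 3) + 1 = 3 + (N + N + 1) + 3)%N by plia.
  rewrite prodF_cat [prodF v _ (3 + _)]prodF_cat prodF1 ?mul1g; last first.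
    move=> k hk; apply: vM'; plia.
  have -> : (- (N + 3)%N%:Z + 3%N%:Z = - N%:Z)%R by plia.
  rewrite (@prodF_eq v h); last first.
    move=> k hk; rewrite /v !a1 ?invg1 ?mulg1 ?invg1 ?mul1g //; plia.
  rewrite -/Q.
  have -> : (- (N + 3)%N%:Z + (3 + (N + N + 1))%N%:Z = P - 1)%R by plia.
  rewrite /= /v.
  have e1 : (P - 1 + 1 = P)%R by plia.
  have e2 : (P + 1 + 1 = P + 2)%R by plia.
  rewrite e1 e2 !hN; try plia.
  rewrite (a1 (P - 1)%R); last by plia.
  rewrite (a1 (P + 2)%R); last by plia.
  have -> : a P = x by rewrite /a eqxx.
  have -> : a (P + 1)%R = y.
    rewrite /a; have -> : ((P + 1)%R == P) = false by plia.
    by rewrite eqxx.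
  rewrite !mulg1 mul1g invg1 mulg1 invMg invgK invgK.
  exact: key.
have [b [bH bE]] := @lemT v (N + 3)%N vM tot.
exists a, b; split.
  exists (N + 3)%N => i hi; apply: a1; plia.
split=> //.
apply: functional_extensionality => i.
rewrite /Hmul /alpha /Hinv -mulgA -bE /v mulKVg //.
Qed.
End Aux.

Theorem lemma4p4 (gT : finGroupType) :
  S1 gT -> S2 gT -> S3 gT -> S4 gT ->
  forall h : int -> gT, inH h ->
    (exists g1 g2 : int -> gT, inH g1 /\ inH g2 /\
       h = Hmul (Hmul (Hmul g1 (alpha (Hinv g1))) g2) (alpha (Hinv g2))) /\
    (exists g1' g2' : int -> gT, inH g1' /\ inH g2' /\
       h = Hmul (Hmul (Hmul (alpha g1') (Hinv g1')) (alpha g2')) (Hinv g2')).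
Proof.
move=> s1 _ _ _ h hH; split; first exact: part1.
have hH' : inH (fun j : int => h (- j)%R).
  by case: hH => N hN; exists N => i hi; apply: hN; lia.
have [a [b [[Na aN] [[Nb bN] E]]]] := @part1 gT s1 _ hH'.
exists (fun i : int => a (1 - i)%R), (fun i : int => b (1 - i)%R); split.
  by exists Na.+1 => i hi; apply: aN; lia.
split; first by exists Nb.+1 => i hi; apply: bN; lia.
apply: functional_extensionality => i.
have := congr1 (fun f => f (- i)%R) E; rewrite /Hmul /alpha /Hinv /= opprK => ->.
have e1 : (1 - (i + 1) = - i)%R by lia.
have e2 : (- i + 1 = 1 - i)%R by lia.
by rewrite e1 e2.
Qed.
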